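(* Let $x=[a_0,a_1,a_2,\ldots]\in\mathbb{R}\setminus\mathbb{Q}$ with convergents $s_k/t_k$, and let $k\ge 0$ be such that $t_k$ and $t_{k+1}$ are both odd. Then $$\left(\frac{s_k}{t_k}\right)=\left(\frac{s_{k+1}}{t_{k+1}}\right),$$ except when either ($t_k\equiv 1\pmod 4$, $t_{k+1}\equiv 3\pmod 4$ and $k$ is odd) or ($t_k\equiv 3\pmod 4$, $t_{k+1}\equiv 1\pmod 4$ and $k$ is even); in these two exceptional cases $$\left(\frac{s_k}{t_k}\right)=-\left(\frac{s_{k+1}}{t_{k+1}}\right).$$
   Context: For $x\in\mathbb{R}\setminus\mathbb{Q}$ with regular continued fraction expansion $x=[a_0,a_1,a_2,\ldots]$ ($a_0\in\mathbb{Z}$, $a_i\ge1$ for $i\ge1$), the convergents $s_k/t_k$ are defined by $s_{-1}=1$, $s_0=a_0$, $s_k=a_ks_{k-1}+s_{k-2}$ and $t_{-1}=0$, $t_0=1$, $t_k=a_kt_{k-1}+t_{k-2}$ for $k\ge1$. For an odd natural number $n$ and an integer $m$ coprime to $n$, $\left(\frac{m}{n}\right)$ denotes the Jacobi symbol (equal to $1$ if $n=1$). *)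

(* Defs.v *)
From mathcomp Require Import all_boot all_order all_algebra.
Set Implicit Arguments. Unset Strict Implicit. Unset Printing Implicit Defensive.
Import Order.TTheory GRing.Theory Num.Theory.
Local Open Scope ring_scope.

(* Convergent recursion: cf_pair a init k = (u_k, u_(k-1)) where
   u_(-1) = init.2 ... more precisely u_0 = init.1, u_(-1) = init.2,
   u_k = a_k u_(k-1) + u_(k-2). *)
Fixpoint cf_pair (a : nat -> int) (init : int * int) (k : nat) : int * int :=
  match k with
  | 0%N => init
  | k'.+1 => let p := cf_pair a init k' in (a k'.+1 * p.1 + p.2, p.1)
  end.

Definition cf_s (a : nat -> int) (k : nat) : int := (cf_pair a (a 0%N, 1) k).1.
Definition cf_t (a : nat -> int) (k : nat) : int := (cf_pair a (1, 0) k).1.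

Definition legendre (m : int) (p : nat) : int :=
  if (p %| m)%Z then 0
  else if [exists x : 'I_p, (p %| (x%:Z ^+ 2 - m))%Z] then 1 else -1.

Definition jacobi (m : int) (n : nat) : int :=
  \prod_(p <- primes n) legendre m p ^+ logn p n.

(* Main.v *)
Require Import Defs.
From mathcomp Require Import all_boot all_order all_algebra all_field.
From mathcomp Require Import zify ring lra.
Set Implicit Arguments. Unset Strict Implicit. Unset Printing Implicit Defensive.
Import Order.TTheory GRing.Theory Num.Theory.
Local Open Scope ring_scope.

Section Leg.
Variable p : nat.
Hypothesis pP : prime p.
Hypothesis podd : odd p.
Local Notation F := 'F_p.
Let chp : p \in [pchar F] := pchar_Fp pP.
Local Notation P := (p./2).

Lemma p_eq : p = (P * 2).+1.
Proof. by rewrite -[in LHS](odd_double_half p) podd -muln2. Qed.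

Lemma P_gt0 : (0 < P)%N.
Proof. have := prime_gt1 pP; rewrite p_eq; case: (P) => //. Qed.

Definition isq (c : F) := [exists y : F, y ^+ 2 == c].

Lemma legendreE m :
  legendre m p = if m%:~R == 0 :> F then 0 else if isq m%:~R then 1 else -1.
Proof.
rewrite /legendre (dvdz_pcharf chp); case: ifP => // _.
congr (if _ then _ else _); apply/existsP/existsP => [[x] | [y]].
  rewrite (dvdz_pcharf chp) rmorphB rmorphXn /= subr_eq0 => hx.
  by exists (x%:R); rewrite -[x%:R]/((x : int)%:~R).
move=> /eqP hy.
have yp : (val y < p)%N by apply: leq_trans (ltn_ord y) _; rewrite Fp_cast.
exists (Ordinal yp); rewrite (dvdz_pcharf chp) rmorphB rmorphXn /= subr_eq0.
by rewrite -[(Posz _)%:~R]/((val y)%:R) natr_Zp hy.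
Qed.

Lemma natF_neq0 i : (0 < i < p)%N -> (i%:R : F) != 0.
Proof.
move=> /andP[i0 ip]; rewrite -(dvdn_pcharf chp); apply/negP => /(dvdn_leq i0).
by rewrite leqNgt ip.
Qed.

Lemma sq_inj i j : (0 < i <= P)%N -> (0 < j <= P)%N ->
  (i%:R : F) ^+ 2 = (j%:R) ^+ 2 -> i = j.
Proof.
move=> hi hj /eqP; rewrite -subr_eq0 subr_sqr mulf_eq0 => /orP[].
  rewrite subr_eq0 => /eqP /(congr1 (@nat_of_ord _)); rewrite !(val_Fp_nat pP) !modn_small //.
    by have := p_eq; lia.
  by have := p_eq; lia.
rewrite -natrD -(dvdn_pcharf chp) => /(dvdn_leq); have := p_eq; lia.
Qed.

Lemma euler (c : F) : c != 0 -> c ^+ P = if isq c then 1 else -1.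
Proof.
move=> c0.
have ferm (x : F) : x != 0 -> x ^+ (P * 2) = 1.
  move=> x0; apply: (mulfI x0); rewrite mulr1 -exprS -p_eq.
  by have := expf_card x; rewrite (card_Fp pP).
rewrite /isq; case: ifP => [/existsP[y /eqP hy] | nsq].
  rewrite -hy.
  by rewrite -exprM mulnC ferm //; apply: contraNneq c0 => y0; rewrite -hy y0 expr0n.
have : (c ^+ P) ^+ 2 == 1 by rewrite -exprM ferm.
rewrite sqrf_eq1 => /orP[/eqP h1|/eqP //]; exfalso.
pose rs := c :: [seq (i%:R : F) ^+ 2 | i <- iota 1 P].
have pn0 : ('X^P - 1 : {poly F}) != 0.
  by rewrite -size_poly_eq0 size_XnsubC ?P_gt0.
have := max_poly_roots pn0 (rs := rs).
rewrite size_XnsubC ?P_gt0 // /rs /= size_map size_iota ltnn.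
suff [H1 H2] : all (root ('X^P - 1)) rs /\ uniq rs by move/(_ H1 H2).
split.
  rewrite /= rootE !hornerE h1 subrr eqxx /=; apply/allP => z /mapP[i].
  rewrite mem_iota => hi ->; rewrite rootE !hornerE -exprM mulnC ferm ?subrr //.
  by apply: natF_neq0; have := p_eq; lia.
rewrite /= map_inj_in_uniq ?iota_uniq ?andbT.
  apply/mapP => -[i _ ci]; move/negbT: nsq => /negP; apply.
  by apply/existsP; exists i%:R; rewrite ci.
by move=> i j; rewrite !mem_iota => hi hj; apply: sq_inj; lia.
Qed.

Lemma legendre_euler m : (legendre m p)%:~R = (m%:~R : F) ^+ P.
Proof.
rewrite legendreE; case: ifP => [/eqP -> | /negbT m0].
  by rewrite expr0n gtn_eqF ?P_gt0.
by rewrite euler //; case: ifP.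
Qed.

Lemma two_neq0 : (2%:R : F) != 0.
Proof. by apply: natF_neq0; have := prime_gt1 pP; rewrite p_eq; lia. Qed.

Definition small3 (x : int) := [|| x == 0, x == 1 | x == -1].

Lemma small3_leg m : small3 (legendre m p).
Proof. by rewrite /legendre; case: ifP => //; case: ifP. Qed.

Lemma small3_inj x y : small3 x -> small3 y -> x%:~R = y%:~R :> F -> x = y.
Proof.
move=> hx hy /eqP; rewrite -subr_eq0 -rmorphB -(dvdz_pcharf chp) dvdzE /= => hd.
have hb : (`|x - y| <= 2)%N by move: hx hy => /or3P[]/eqP-> /or3P[]/eqP->.
have p3 : (2 < p)%N by have := prime_gt1 pP; rewrite p_eq; lia.
apply/eqP; rewrite -subr_eq0 -absz_eq0; apply/eqP.
case: (posnP `|x - y|) => // hpos; have := dvdn_leq hpos hd; lia.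
Qed.

Lemma small3M x y : small3 x -> small3 y -> small3 (x * y).
Proof. by move=> /or3P[]/eqP-> /or3P[]/eqP->. Qed.

Lemma legendre_mul m n : legendre (m * n) p = legendre m p * legendre n p.
Proof.
apply: small3_inj; rewrite ?small3_leg ?small3M ?small3_leg //.
by rewrite rmorphM /= !legendre_euler rmorphM exprMn.
Qed.

Lemma legendre_mod m n : (p %| m - n)%Z -> legendre m p = legendre n p.
Proof.
rewrite (dvdz_pcharf chp) rmorphB subr_eq0 /= => /eqP h.
by apply: small3_inj; rewrite ?small3_leg // !legendre_euler h.
Qed.

Lemma legendre_m1 : legendre (-1) p = (-1) ^+ P.
Proof.
apply: small3_inj; rewrite ?small3_leg //.
  by rewrite -signr_odd; case: odd.
by rewrite legendre_euler rmorphXn /= rmorphN rmorph1.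
Qed.

Lemma legendre1 : legendre 1 p = 1.
Proof.
apply: small3_inj; rewrite ?small3_leg //.
by rewrite legendre_euler rmorph1 expr1n.
Qed.

Lemma legendre_sq m : ~~ (p %| m)%Z -> legendre m p ^+ 2 = 1.
Proof. by rewrite /legendre => /negPf ->; case: ifP => _; rewrite ?expr1n ?sqrrN ?expr1n. Qed.


Section Gauss.
Variable q : nat.
Hypothesis hq : ~~ (p %| q)%N.
Hypothesis qodd : odd q.

Lemma gauss_eis :
  (q%:R : F) ^+ P = (-1) ^+ (\sum_(1 <= k < P.+1) (q * k %/ p))%N.
Proof.
have hp := p_eq.
pose I := index_iota 1 P.+1.
pose r k := (q * k %% p)%N.
pose b k := (P < r k)%N.
pose f k := if b k then (p - r k)%N else r k.
have memI k : (k \in I) = (0 < k <= P)%N by rewrite mem_index_iota.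
have rpos k : k \in I -> (0 < r k < p)%N.
  rewrite memI => hk; rewrite ltn_pmod ?andbT; last by rewrite hp.
  rewrite lt0n; apply/negP => h.
  have : (p %| q * k)%N by [].
  rewrite Euclid_dvdM // (negPf hq) /= => /(dvdn_leq) ; lia.
have fI k : k \in I -> f k \in I.
  move=> kI; have := rpos k kI; rewrite memI /f /b; case: (ltnP P (r k)) => H; lia.
have fF k : k \in I -> ((f k)%:R : F) = (-1) ^+ (b k) * q%:R * k%:R.
  move=> kI; rewrite -mulrA -natrM.
  have -> : ((q*k)%:R : F) = (r k)%:R by rewrite (Fp_nat_mod pP).
  rewrite /f; case: (b k) => /=; rewrite ?expr0 ?expr1 ?mul1r // mulN1r natrB; last first.
    by have := rpos k kI; lia.
  by rewrite (pchar_Fp_0 pP) sub0r.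
have finj : {in I &, injective f}.
  move=> i j iI jI fij; apply: (@sq_inj i j); rewrite -?memI //.
  have : ((f i)%:R : F) ^+ 2 = (f j)%:R ^+ 2 by rewrite fij.
  rewrite !fF // -!mulrA !exprMn !sqrr_sign !mul1r => /(mulfI _); apply.
  by rewrite expf_neq0 // -(dvdn_pcharf chp).
have hperm : perm_eq (map f I) I.
  apply: uniq_perm; rewrite ?map_inj_in_uniq ?iota_uniq //.
  have [] := uniq_min_size (s1 := map f I) (s2 := I).
  - by rewrite map_inj_in_uniq ?iota_uniq.
  - by move=> z /mapP[k kI ->]; apply: fI.
  - by rewrite size_map.
  by [].
have prodeq : \prod_(k <- I) (k%:R : F) =
    \prod_(k <- I) ((-1) ^+ (b k) * q%:R * k%:R).
  rewrite -(perm_big _ hperm) big_map; apply: eq_big_seq => k kI.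
  by rewrite fF.
rewrite !big_split /= prodr_const_nat subn1 /= in prodeq.
have nz : \prod_(k <- I) (k%:R : F) != 0.
  rewrite prodf_seq_neq0; apply/allP => k; rewrite memI /= => hk.
  by apply: natF_neq0; lia.
have sgn : \prod_(k <- I) ((-1) ^+ (b k) : F) = (-1) ^+ (\sum_(k <- I) b k)%N.
  by rewrite (big_morph (fun n : nat => (-1) ^+ n : F) (fun x y => exprD _ x y) (expr0 _)).
rewrite sgn in prodeq.
have e1 : (-1) ^+ (\sum_(k <- I) b k)%N * (q%:R : F) ^+ P = 1.
  by apply: (mulIf nz); rewrite mul1r -prodeq.
have e2 : (q%:R : F) ^+ P = (-1) ^+ (\sum_(k <- I) b k)%N.
  by rewrite -[LHS](signrMK (\sum_(k <- I) b k)%N) e1 mulr1.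
rewrite e2 -signr_odd -[in RHS]signr_odd; congr (_ ^+ (nat_of_bool _)).
have E1 : (\sum_(k <- I) q * k = (\sum_(k <- I) (q * k %/ p)) * p + \sum_(k <- I) r k)%N.
  by rewrite big_distrl /= -big_split /=; apply: eq_bigr => k _; rewrite -divn_eq.
have E2 : (\sum_(k <- I) r k + 2 * \sum_(k <- I) (b k * f k) =
           \sum_(k <- I) f k + p * \sum_(k <- I) b k)%N.
  rewrite !big_distrr -!big_split /=; apply: eq_big_seq => k kI.
  have := rpos k kI; rewrite /f; case: (b k) => /=; lia.
have E3 : (\sum_(k <- I) f k = \sum_(k <- I) k)%N.
  by rewrite -[in RHS](perm_big _ hperm) big_map.
have E4 : (\sum_(k <- I) q * k = q * \sum_(k <- I) k)%N by rewrite big_distrr.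
move/(congr1 odd): E1; move/(congr1 odd): E2.
rewrite E3 E4 !oddD !oddM /= qodd podd /= !andbT.
move: (odd (\sum_(k <- I) r k)) (odd (\sum_(k <- I) (b k * f k)%N)) (odd (\sum_(k <- I) k)) (odd (\sum_(k <- I) b k)) (odd (\sum_(k <- I) (q * k %/ p))). by do 5!case.
Qed.

End Gauss.

Lemma legendre_gauss (q : nat) : ~~ (p %| q)%N -> odd q ->
  legendre q p = (-1) ^+ (\sum_(1 <= k < P.+1) (q * k %/ p))%N.
Proof.
move=> hq qo; apply: small3_inj; rewrite ?small3_leg //.
  by rewrite -signr_odd; case: odd.
by rewrite legendre_euler gauss_eis // rmorphXn /= rmorphN rmorph1.
Qed.

End Leg.

Lemma count_le (c d Q : nat) : (0 < d)%N ->
  (\sum_(1 <= j < Q.+1) (d * j <= c) = minn Q (c %/ d))%N.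
Proof.
move=> d0; elim: Q => [|Q IH]; first by rewrite min0n; apply: big_geq.




rewrite big_nat_recr //= IH.
have -> : ((d * Q.+1 <= c) = (Q.+1 <= c %/ d))%N by rewrite leq_divRL // mulnC.
case: leqP => h; lia.
Qed.

Lemma lattice (p q : nat) : prime p -> prime q -> odd p -> odd q -> p != q ->
  (\sum_(1 <= k < (p./2).+1) (q * k %/ p) + \sum_(1 <= j < (q./2).+1) (p * j %/ q)
   = p./2 * q./2)%N.
Proof.
move=> pP qP po qo pq.
have hp := p_eq po; have hq := p_eq qo.
set P := p./2 in hp *; set Q := q./2 in hq *.
have p0 : (0 < p)%N by rewrite hp.
have q0 : (0 < q)%N by rewrite hq.
have S1 : (\sum_(1 <= k < P.+1) (q * k %/ p) =
    \sum_(1 <= k < P.+1) \sum_(1 <= j < Q.+1) (p * j <= q * k))%N.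
  apply: eq_big_seq => k; rewrite mem_index_iota => hk.
  rewrite count_le //; apply/esym/minn_idPr.
  rewrite -ltnS ltn_divLR //; nia.
have S2 : (\sum_(1 <= j < Q.+1) (p * j %/ q) =
    \sum_(1 <= j < Q.+1) \sum_(1 <= k < P.+1) (q * k <= p * j))%N.
  apply: eq_big_seq => j; rewrite mem_index_iota => hj.
  rewrite count_le //; apply/esym/minn_idPr.
  rewrite -ltnS ltn_divLR //; nia.
rewrite S1 S2 [X in (_ + X)%N]exchange_big -big_split /=.
have -> : (P * Q = (P.+1 - 1) * Q)%N by rewrite subn1.
rewrite -sum_nat_const_nat.
apply: eq_big_seq => k; rewrite mem_index_iota => hk.
transitivity (\sum_(1 <= j < Q.+1) 1)%N; last by rewrite sum_nat_const_nat subn1 muln1.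
rewrite -big_split /=.
apply: eq_big_seq => j; rewrite mem_index_iota => hj.
have ne : (p * j != q * k)%N.
  apply/eqP => e; have : (p %| q * k)%N by rewrite -e dvdn_mulr.
  rewrite Euclid_dvdM // dvdn_prime2 // (negPf pq) /= => /dvdn_leq; lia.
by case: ltngtP ne.
Qed.

Lemma qr_prime (p q : nat) : prime p -> prime q -> odd p -> odd q -> p != q ->
  legendre q p * legendre p q = (-1) ^+ (p./2 * q./2)%N.
Proof.
move=> pP qP po qo pq.
rewrite !legendre_gauss // ?dvdn_prime2 // 1?eq_sym //.
by rewrite -exprD lattice.
Qed.

Lemma jacobi_n1 m : jacobi m 1 = 1.
Proof. by rewrite /jacobi big_nil. Qed.

Lemma jacobi_prime m p : prime p -> jacobi m p = legendre m p.
Proof. by move=> pP; rewrite /jacobi primes_prime // big_seq1 logn_prime // eqxx expr1. Qed.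

Lemma jacobiE m n N : (0 < n)%N -> (n < N)%N ->
  jacobi m n = \prod_(p <- iota 0 N | prime p) legendre m p ^+ logn p n.
Proof.
move=> n0 nN.
have -> : \prod_(p <- iota 0 N | prime p) legendre m p ^+ logn p n =
          \prod_(p <- iota 0 N | p \in primes n) legendre m p ^+ logn p n.
  rewrite big_mkcond [RHS]big_mkcond /=; apply: eq_bigr => p _.
  rewrite mem_primes n0 /=; case pP: (prime p) => //=.
  case: ifP => // pn; rewrite logn_coprime ?expr0 //.
  by rewrite prime_coprime // pn.
rewrite -big_filter /jacobi; apply: perm_big; apply: uniq_perm.
- exact: primes_uniq.
- by rewrite filter_uniq ?iota_uniq.
move=> p; rewrite mem_filter mem_iota /= add0n; case pn: (p \in primes n) => //=.
move: pn; rewrite mem_primes => /and3P[_ _ /dvdn_leq] => /(_ n0); lia.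
Qed.

Lemma jacobi_mul_n m a b : (0 < a)%N -> (0 < b)%N ->
  jacobi m (a * b)%N = jacobi m a * jacobi m b.
Proof.
move=> a0 b0.
have ab0 : (0 < a * b)%N by rewrite muln_gt0 a0.
rewrite !(@jacobiE m _ (a * b)%N.+1) //; try by rewrite ltnS ?leq_pmulr ?leq_pmull.
rewrite -big_split /=; apply: eq_bigr => p _.
by rewrite lognM // exprD.
Qed.

Lemma odd_ind (Pr : nat -> Prop) : Pr 1%N -> (forall p, prime p -> odd p -> Pr p) ->
  (forall a b, odd a -> odd b -> Pr a -> Pr b -> Pr (a * b)%N) ->
  forall n, odd n -> Pr n.
Proof.
move=> h1 hp hm n; elim: n {-2}n (leqnn n) => [|N IH] n.
  by rewrite leqn0 => /eqP ->.
move=> nN no; case: (ltngtP n 1) => [|n1|->//].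
  by rewrite ltnS leqn0 => /eqP n0; rewrite n0 in no.
have pP := pdiv_prime n1.
have pd := pdiv_dvd n.
have n0 : (0 < n)%N by lia.
rewrite -(divnK pd) mulnC in no *.
have po : odd (pdiv n) by move: no; rewrite oddM => /andP[].
have qo : odd (n %/ pdiv n) by move: no; rewrite oddM => /andP[].
apply: hm => //; first by apply: hp.
apply: IH => //.
have := prime_gt1 pP; rewrite -ltnS => h.
rewrite -ltnS; apply: leq_trans nN; rewrite ltn_divLR ?pdiv_gt0 //.
rewrite -[X in (X < _)%N]muln1 ltn_pmul2l //; lia.
Qed.

Lemma primes_odd n p : odd n -> p \in primes n -> prime p /\ odd p.
Proof.
move=> no; rewrite mem_primes => /and3P[pP _ pn]; split => //.
case: (even_prime pP) => // p2; move: pn; rewrite p2 dvdn2 => /negP.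
by rewrite no.
Qed.

Lemma jacobi_mul_m x y n : odd n -> jacobi (x * y) n = jacobi x n * jacobi y n.
Proof.
move=> no; rewrite /jacobi -big_split /=; apply: eq_big_seq => p /(primes_odd no)[pP po].
by rewrite legendre_mul // exprMn.
Qed.

Lemma jacobi_mod x y n : odd n -> (n %| x - y)%Z -> jacobi x n = jacobi y n.
Proof.
move=> no hd; rewrite /jacobi; apply: eq_big_seq => p pn.
have [pP po] := primes_odd no pn.
move: pn; rewrite mem_primes => /and3P[_ _ pd].
rewrite (@legendre_mod p pP po x y) //.
by apply: dvdz_trans hd; rewrite dvdzE.
Qed.

Lemma jacobi_1 n : odd n -> jacobi 1 n = 1.
Proof.
move=> no; rewrite /jacobi big_seq big1 // => p /(primes_odd no)[pP po].
by rewrite legendre1 ?expr1n.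
Qed.

Lemma jacobi_sq m n : odd n -> coprime `|m| n -> jacobi m n ^+ 2 = 1.
Proof.
move=> no cop; rewrite /jacobi -prodrXl big_seq big1 // => p pn.
have [pP po] := primes_odd no pn.
move: pn; rewrite mem_primes => /and3P[_ _ pd].
rewrite -exprM mulnC exprM legendre_sq ?expr1n //.
rewrite dvdzE /=; apply/negP => pm.
have : (p %| gcdn `|m| n)%N by rewrite dvdn_gcd pm.
by rewrite (eqP cop) dvdn1 => /eqP p1; move: (prime_gt1 pP); rewrite p1.
Qed.

Lemma half_mul a b : odd a -> odd b ->
  ((a * b)./2 = (a./2 * b./2).*2 + a./2 + b./2)%N.
Proof.
move=> ao bo; have ha := p_eq ao; have hb := p_eq bo.
rewrite {1}ha {1}hb -divn2.
have -> : ((a./2 * 2).+1 * (b./2 * 2).+1 = (a./2 * b./2 * 2 + a./2 + b./2) * 2 + 1)%N.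
  by rewrite !mulSn; ring.
by rewrite divnMDl // -muln2; lia.
Qed.

Lemma sign_half_mul (M a b : nat) : odd a -> odd b ->
  (-1) ^+ (M * (a * b)./2)%N = (-1) ^+ (M * a./2)%N * (-1) ^+ (M * b./2)%N :> int.
Proof.
move=> ao bo; rewrite half_mul // -exprD -!mulnDr.
rewrite -signr_odd -[in RHS]signr_odd; congr (_ ^+ (nat_of_bool _)).
by rewrite !oddM !oddD odd_double.
Qed.

Lemma jacobi_m1 n : odd n -> jacobi (-1) n = (-1) ^+ (n./2).
Proof.
move: n; apply: odd_ind.
- by rewrite jacobi_n1.
- by move=> p pP po; rewrite jacobi_prime // legendre_m1.
move=> a b ao bo ha hb; rewrite jacobi_mul_n ?ha ?hb; last 2 first.
- by case: (a) ao.
- by case: (b) bo.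
by have := sign_half_mul 1 ao bo; rewrite !mul1n.
Qed.

Definition Rrec (m n : nat) :=
  jacobi m n * jacobi n m = (-1) ^+ (m./2 * n./2)%N.

Lemma Rsym m n : Rrec m n -> Rrec n m.
Proof. by rewrite /Rrec mulrC mulnC. Qed.

Lemma Rmul m a b : odd m -> odd a -> odd b -> Rrec m a -> Rrec m b -> Rrec m (a * b)%N.
Proof.
move=> mo ao bo ha hb; rewrite /Rrec.
rewrite jacobi_mul_n; last 2 first.
- by case: (a) ao.
- by case: (b) bo.
rewrite PoszM jacobi_mul_m // sign_half_mul // -ha -hb; ring.
Qed.

Lemma R1 m : odd m -> Rrec m 1.
Proof. by move=> mo; rewrite /Rrec jacobi_n1 jacobi_1 // muln0 expr0 mulr1. Qed.

Lemma rec_prime q : prime q -> odd q -> forall m, odd m -> coprime m q -> Rrec m q.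
Proof.
move=> qP qo; apply: odd_ind.
- by move=> _; apply: Rsym; apply: R1.
- move=> p pP po cop.
  have pq : p != q.
    apply: contraTneq cop => ->; rewrite /coprime gcdnn.
    by have := prime_gt1 qP; case: (q) => [|[]].
  by rewrite /Rrec !jacobi_prime // mulrC qr_prime.
move=> a b ao bo ha hb; rewrite coprimeMl => /andP[ca cb].
apply: Rsym; apply: Rmul => //; apply: Rsym; [exact: ha | exact: hb].
Qed.

Lemma jacobi_rec n : odd n -> forall m, odd m -> coprime m n -> Rrec m n.
Proof.
move: n; apply: odd_ind.
- by move=> m mo _; apply: R1.
- by move=> q qP qo m mo cop; apply: rec_prime.
move=> a b ao bo ha hb m mo; rewrite coprimeMr => /andP[ca cb].
by apply: Rmul => //; [apply: ha | apply: hb].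
Qed.

Lemma cf_det (a : nat -> int) x y k :
  (cf_pair a x k).1 * (cf_pair a y k).2 - (cf_pair a x k).2 * (cf_pair a y k).1
  = (-1) ^+ k * (x.1 * y.2 - x.2 * y.1).
Proof.
elim: k => [|k IH] /=; first by rewrite expr0 mul1r.
rewrite exprS -mulrA -IH; ring.
Qed.

Lemma cf_t_pos (a : nat -> int) (ha : forall i : nat, (0 < i)%N -> 1 <= a i) k :
  1 <= (cf_pair a (1, 0) k).1 /\ 0 <= (cf_pair a (1, 0) k).2.
Proof.
elim: k => [|k [IH1 IH2]] /=; first by [].
have := ha k.+1 isT => hak; split; last by apply: le_trans IH1.
have h1 : 1 <= a k.+1 * (cf_pair a (1, 0) k).1 by rewrite -[1]mulr1; apply: ler_pM.
by rewrite -[1]addr0; apply: lerD.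
Qed.

Lemma mod4_half T : odd T -> (T %% 4 = if odd T./2 then 3 else 1)%N.
Proof.
move=> To; have hT := p_eq To; set h := T./2 in hT *.
have := odd_double_half h; rewrite -muln2; case: (odd h) => /= e; lia.
Qed.

Theorem lemma1 (a : nat -> int) (ha : forall i : nat, (0 < i)%N -> 1 <= a i)
  (k : nat)
  (hk : (cf_t a k %% 2)%Z = 1) (hk1 : (cf_t a k.+1 %% 2)%Z = 1) :
  jacobi (cf_s a k) `|cf_t a k|%N =
  (if ((cf_t a k %% 4)%Z == 1) && ((cf_t a k.+1 %% 4)%Z == 3) && odd k
      || ((cf_t a k %% 4)%Z == 3) && ((cf_t a k.+1 %% 4)%Z == 1) && ~~ odd k
   then -1 else 1) * jacobi (cf_s a k.+1) `|cf_t a k.+1|%N.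
Proof.
have det : cf_s a k.+1 * cf_t a k - cf_s a k * cf_t a k.+1 = (-1) ^+ k.
  have := cf_det a (a 0%N, 1) (1, 0) k.+1; rewrite /cf_s /cf_t /= => h.
  rewrite h exprS mulN1r mulNr -mulrN.
  have -> : (- (a 0%N * 0%:Z - 1%:Z * 1%:Z) = 1 :> int) by rewrite mulr0 mulr1 sub0r opprK.
  by rewrite mulr1.
have tp : 0 <= cf_t a k by have [h _] := cf_t_pos ha k; apply: le_trans h.
have tp1 : 0 <= cf_t a k.+1 by have [h _] := cf_t_pos ha k.+1; apply: le_trans h.
move: det hk hk1; rewrite -(gez0_abs tp) -(gez0_abs tp1).
set s := cf_s a k; set s' := cf_s a k.+1.
set T := `|cf_t a k|%N; set U := `|cf_t a k.+1|%N.
rewrite !modz_nat => det hk hk1.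
have To : odd T by move: hk; rewrite modn2; case: (odd T).
have Uo : odd U by move: hk1; rewrite modn2; case: (odd U).
move: det; set e : int := (-1) ^+ k => det.
have ee : e * e = 1 by rewrite -expr2 sqrr_sign.
have copz : forall (x y : int) u v, u * x + v * y = e -> coprime `|x| `|y|.
  move=> x y u v h; rewrite -coprimezE; apply/coprimezP.
  exists (u * e, v * e) => /=.
  have -> : u * e * x + v * e * y = (u * x + v * y) * e by ring.
  by rewrite h ee.
have cTU : coprime T U.
  by have := @copz T U s' (- s); rewrite !absz_nat; apply; rewrite -det; ring.
have csT : coprime `|s| T.
  by have := @copz s T (- U%:Z) s'; rewrite absz_nat; apply; rewrite -det; ring.
have cs'U : coprime `|s'| U.
  by have := @copz s' U T%:Z (- s); rewrite absz_nat; apply; rewrite -det; ring.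
have J1 : jacobi s T * jacobi U T = jacobi (- e) T.
  rewrite -jacobi_mul_m //; apply: jacobi_mod => //.
  by apply/dvdzP; exists s'; rewrite -det; ring.
have J2 : jacobi s' U * jacobi T U = jacobi e U.
  rewrite -jacobi_mul_m //; apply: jacobi_mod => //.
  by apply/dvdzP; exists s; rewrite -det; ring.
have Rc := jacobi_rec Uo To cTU.
have sqUT : jacobi U T ^+ 2 = 1 by apply: jacobi_sq; rewrite // absz_nat coprime_sym.
have sqTU : jacobi T U ^+ 2 = 1 by apply: jacobi_sq; rewrite // absz_nat.
have sqs'U : jacobi s' U ^+ 2 = 1 by apply: jacobi_sq.
have E1 : jacobi s T = jacobi (- e) T * jacobi U T.
  by rewrite -J1 -mulrA -expr2 sqUT mulr1.
have E2 : jacobi T U = jacobi e U * jacobi s' U.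
  by rewrite -J2 mulrC mulrA -expr2 sqs'U mul1r.
have E3 : jacobi U T = (-1) ^+ (T./2 * U./2)%N * jacobi T U.
  by rewrite /Rrec in Rc; rewrite -Rc [jacobi T U * _]mulrC -mulrA -expr2 sqTU mulr1.
rewrite E1 E3 E2 !mulrA; congr (_ * _).
rewrite (mod4_half To) (mod4_half Uo) /e -signr_odd.
rewrite -[(-1) ^+ (T./2 * U./2)%N]signr_odd oddM.
case: (odd k) => /=; rewrite ?opprK ?jacobi_1 // ?jacobi_m1 //.
  rewrite -[(-1) ^+ U./2]signr_odd.
  by case: (odd T./2); case: (odd U./2).
rewrite -[(-1) ^+ T./2]signr_odd.
by case: (odd T./2); case: (odd U./2).
Qed.
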